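(* Let $B$ and $C$ be groups with $C$ abelian, and let $\phi: C\to \mathrm{Aut}(B)$, $c\mapsto\phi_c$, and $\psi: B\to\mathrm{Aut}(C)$, $b\mapsto\psi_b$, be homomorphisms such that $\phi_{\psi_b(c)} = \phi_c$ for all $b\in B$, $c\in C$. On $A = B\times C$ define \[ (b_1,c_1)\cdot(b_2,c_2) = (b_1\phi_{c_1}(b_2),\, c_1c_2),\qquad (b_1,c_1)\circ(b_2,c_2) = (b_1b_2,\, c_1\psi_{b_1}(c_2)). \] Then $(A,\cdot,\circ)$ is a skew brace, i.e. $a_1\circ(a_2\cdot a_3) = (a_1\circ a_2)\cdot a_1^{-1}\cdot(a_1\circ a_3)$ for all $a_1,a_2,a_3\in A$, where $a_1^{-1}$ is the inverse in $(A,\cdot)$.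
   Context: A skew brace is a set $A$ with two group operations $\cdot$ and $\circ$ such that $a\circ(b\cdot c) = (a\circ b)\cdot a^{-1}\cdot (a\circ c)$ for all $a,b,c\in A$. Note $(A,\cdot)=B\rtimes_\phi C$ and $(A,\circ)=B\ltimes_\psi C$ are groups. *)

(* Defs.v *)
Definition is_group {T : Type} (mul : T -> T -> T) (one : T) (inv : T -> T) : Prop :=
  (forall x y z, mul x (mul y z) = mul (mul x y) z) /\
  (forall x, mul one x = x /\ mul x one = x) /\
  (forall x, mul x (inv x) = one /\ mul (inv x) x = one).

Definition is_abelian {T : Type} (mul : T -> T -> T) : Prop :=
  forall x y, mul x y = mul y x.

Definition is_aut {T : Type} (mul : T -> T -> T) (f : T -> T) : Prop :=
  (forall x y, f (mul x y) = mul (f x) (f y)) /\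
  (exists g : T -> T, (forall x, g (f x) = x) /\ (forall x, f (g x) = x)).

Definition is_aut_hom {G T : Type} (mulG : G -> G -> G) (mulT : T -> T -> T)
  (act : G -> T -> T) : Prop :=
  (forall g, is_aut mulT (act g)) /\
  (forall g1 g2 x, act (mulG g1 g2) x = act g1 (act g2 x)).

Section Ops.
Context {B C : Type} (mulB : B -> B -> B) (oneB : B) (invB : B -> B)
  (mulC : C -> C -> C) (oneC : C) (invC : C -> C)
  (phi : C -> B -> B) (psi : B -> C -> C).

Definition dotA (a1 a2 : B * C) : B * C :=
  (mulB (fst a1) (phi (snd a1) (fst a2)), mulC (snd a1) (snd a2)).
Definition circA (a1 a2 : B * C) : B * C :=
  (mulB (fst a1) (fst a2), mulC (snd a1) (psi (fst a1) (snd a2))).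
Definition oneA : B * C := (oneB, oneC).
Definition dotinvA (a : B * C) : B * C := (phi (invC (snd a)) (invB (fst a)), invC (snd a)).
Definition circinvA (a : B * C) : B * C := (invB (fst a), psi (invB (fst a)) (invC (snd a))).
End Ops.

Definition is_skew_brace {A : Type} (dot : A -> A -> A) (one : A) (inv : A -> A)
  (circ : A -> A -> A) (cone : A) (cinv : A -> A) : Prop :=
  is_group dot one inv /\ is_group circ cone cinv /\
  (forall a1 a2 a3, circ a1 (dot a2 a3) = dot (dot (circ a1 a2) (inv a1)) (circ a1 a3)).

(* Main.v *)
Require Import Defs.

Lemma hom_one {T} (mul : T -> T -> T) one inv (f : T -> T) :
  is_group mul one inv -> (forall x y, f (mul x y) = mul (f x) (f y)) -> f one = one.
Proof.
  intros [A [I V]] H.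
  assert (E : f one = mul (f one) (f one)) by (rewrite <- H; f_equal; symmetry; apply I).
  destruct (V (f one)) as [_ V2]. destruct (I (f one)) as [I1 _].
  assert (E2 : mul (inv (f one)) (f one) = mul (inv (f one)) (mul (f one) (f one)))
    by (f_equal; exact E).
  rewrite A, V2, I1 in E2. symmetry. exact E2.
Qed.

Lemma act_one {G T} (mulG : G -> G -> G) oneG invG (mulT : T -> T -> T) act :
  is_group mulG oneG invG -> is_aut_hom mulG mulT act -> forall x, act oneG x = x.
Proof.
  intros [A [I V]] [Ha Hm] x.
  destruct (Ha oneG) as [_ [g [g1 g2]]].
  assert (E : act oneG (act oneG x) = act oneG x).
  { rewrite <- Hm. f_equal. apply (proj1 (I oneG)). }
  transitivity (g (act oneG (act oneG x))); [now rewrite g1 | now rewrite E, g1].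
Qed.

Lemma act_inv {G T} (mulG : G -> G -> G) oneG invG (mulT : T -> T -> T) act :
  is_group mulG oneG invG -> is_aut_hom mulG mulT act ->
  forall c x, act c (act (invG c) x) = x /\ act (invG c) (act c x) = x.
Proof.
  intros HG HA c x. pose proof (act_one _ _ _ _ _ HG HA) as O.
  destruct HG as [A [I V]]. destruct HA as [Ha Hm].
  split; rewrite <- Hm; [rewrite (proj1 (V c)) | rewrite (proj2 (V c))]; apply O.
Qed.

Theorem lemma8p1 (B C : Type)
  (mulB : B -> B -> B) (oneB : B) (invB : B -> B)
  (mulC : C -> C -> C) (oneC : C) (invC : C -> C)
  (phi : C -> B -> B) (psi : B -> C -> C) :
  is_group mulB oneB invB ->
  is_group mulC oneC invC ->
  is_abelian mulC ->
  is_aut_hom mulC mulB phi ->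
  is_aut_hom mulB mulC psi ->
  (forall b c x, phi (psi b c) x = phi c x) ->
  is_skew_brace
    (dotA mulB mulC phi) (oneA oneB oneC) (dotinvA invB invC phi)
    (circA mulB mulC psi) (oneA oneB oneC) (circinvA invB invC psi).
Proof.
  intros GB GC Ab Hphi Hpsi Hpp.
  pose proof (act_one _ _ _ _ _ GC Hphi) as phi1.
  pose proof (act_one _ _ _ _ _ GB Hpsi) as psi1.
  pose proof (act_inv _ _ _ _ _ GC Hphi) as phiV.
  pose proof (act_inv _ _ _ _ _ GB Hpsi) as psiV.
  assert (phio : forall c, phi c oneB = oneB).
  { intro c. apply (hom_one _ _ _ _ GB). apply (proj1 (proj1 Hphi c)). }
  assert (psio : forall b, psi b oneC = oneC).
  { intro b. apply (hom_one _ _ _ _ GC). apply (proj1 (proj1 Hpsi b)). }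
  destruct Hphi as [Hpa Hpm]. destruct Hpsi as [Hsa Hsm].
  assert (phiM : forall c x y, phi c (mulB x y) = mulB (phi c x) (phi c y))
    by (intro c; apply (proj1 (Hpa c))).
  assert (psiM : forall b x y, psi b (mulC x y) = mulC (psi b x) (psi b y))
    by (intro b; apply (proj1 (Hsa b))).
  destruct GB as [AB [IB VB]]. destruct GC as [AC [IC VC]].
  unfold is_skew_brace, is_group, dotA, circA, oneA, dotinvA, circinvA; simpl.
  split; [|split].
  - split; [|split].
    + intros [b1 c1] [b2 c2] [b3 c3]; simpl.
      rewrite phiM, Hpm, !AB, !AC. reflexivity.
    + intros [b c]; simpl. rewrite phi1, phio, (proj1 (IB b)), (proj2 (IB b)),
        (proj1 (IC c)), (proj2 (IC c)). split; reflexivity.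
    + intros [b c]; simpl. rewrite (proj1 (phiV c _)), (proj1 (VB b)), (proj1 (VC c)),
        (proj2 (VC c)), <- phiM, (proj2 (VB b)), phio. split; reflexivity.
  - split; [|split].
    + intros [b1 c1] [b2 c2] [b3 c3]; simpl.
      rewrite psiM, Hsm, !AB, !AC. reflexivity.
    + intros [b c]; simpl. rewrite psi1, psio, (proj1 (IB b)), (proj2 (IB b)),
        (proj1 (IC c)), (proj2 (IC c)). split; reflexivity.
    + intros [b c]; simpl. rewrite (proj1 (psiV b _)), (proj1 (VB b)), (proj1 (VC c)),
        (proj2 (VB b)), <- psiM, (proj2 (VC c)), psio. split; reflexivity.
  - intros [b1 c1] [b2 c2] [b3 c3]; simpl. f_equal.
    + rewrite <- !Hpm.
      assert (E : mulC (mulC c1 (psi b1 c2)) (invC c1) = psi b1 c2).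
      { rewrite (Ab c1), <- AC, (proj1 (VC c1)), (proj2 (IC _)). reflexivity. }
      rewrite E, !Hpp, <- (AB (mulB b1 b2)), <- phiM, (AB (invB b1)), (proj2 (VB b1)),
        (proj1 (IB b3)), AB. reflexivity.
    + rewrite <- (AC (mulC c1 (psi b1 c2)) (invC c1)), (AC (invC c1)), (proj2 (VC c1)), (proj1 (IC _)), psiM, AC.
      reflexivity.
Qed.
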